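(* There are no rational numbers (in particular, no integers) $x_1,x_2,x_3,d_1,d_2,d_3,L$ with $x_1,x_2,x_3,d_1,d_2,d_3>0$ such that $\operatorname{rank}N\le 2$, $\operatorname{rank}N_1=2$, $\operatorname{rank}N_2=2$, and $\tilde p_2=\tilde p_3=\dots=\tilde p_8=0$. Likewise there are no such positive rational numbers with $\operatorname{rank}N\le 2$, $\operatorname{rank}N_1=\operatorname{rank}N_2=2$ satisfying $p_1=p_2=p_3=0$.
   Context: Define $p_1=x_2^2+x_3^2-d_1^2$, $p_2=x_3^2+x_1^2-d_2^2$, $p_3=x_1^2+x_2^2-d_3^2$, and $\tilde p_2=p_1+p_2+p_3$, $\tilde p_3=d_1p_1+d_2p_2+d_3p_3$, $\tilde p_4=x_1p_1+x_2p_2+x_3p_3$, $\tilde p_5=x_1d_1p_1+x_2d_2p_2+x_3d_3p_3$, $\tilde p_6=x_1^2p_1+x_2^2p_2+x_3^2p_3$, $\tilde p_7=d_1^2p_1+d_2^2p_2+d_3^2p_3$, $\tilde p_8=x_1^2d_1^2p_1+x_2^2d_2^2p_2+x_3^2d_3^2p_3$. $N$ is the $3\times 7$ matrix whose $i$-th row is $(1,\ d_i,\ x_i,\ x_id_i,\ x_i^2,\ d_i^2,\ x_i^2d_i^2)$; $N_1$ is the $3\times 2$ matrix with rows $(1,d_i)$; $N_2$ is the $3\times 2$ matrix with rows $(1,x_i)$, $i=1,2,3$. Ranks are over $\mathbb{Q}$. *)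

(* Defs.v *)
From HB Require Import structures.
From mathcomp Require Import all_boot all_order all_algebra.
Set Implicit Arguments. Unset Strict Implicit. Unset Printing Implicit Defensive.
Import Order.TTheory GRing.Theory Num.Theory.
Local Open Scope ring_scope.

(* the function i |-> (a, b, c)_i on indices 'I_3 = {0,1,2} (i.e. 1,2,3 in the paper) *)
Definition vec3 (a b c : rat) (i : 'I_3) : rat :=
  match val i with 0%N => a | 1%N => b | _ => c end.

Section Polys.
Variables x1 x2 x3 d1 d2 d3 : rat.

Definition p1 : rat := x2 ^+ 2 + x3 ^+ 2 - d1 ^+ 2.
Definition p2 : rat := x3 ^+ 2 + x1 ^+ 2 - d2 ^+ 2.
Definition p3 : rat := x1 ^+ 2 + x2 ^+ 2 - d3 ^+ 2.

Definition pt2 : rat := p1 + p2 + p3.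
Definition pt3 : rat := d1 * p1 + d2 * p2 + d3 * p3.
Definition pt4 : rat := x1 * p1 + x2 * p2 + x3 * p3.
Definition pt5 : rat := x1 * d1 * p1 + x2 * d2 * p2 + x3 * d3 * p3.
Definition pt6 : rat := x1 ^+ 2 * p1 + x2 ^+ 2 * p2 + x3 ^+ 2 * p3.
Definition pt7 : rat := d1 ^+ 2 * p1 + d2 ^+ 2 * p2 + d3 ^+ 2 * p3.
Definition pt8 : rat :=
  x1 ^+ 2 * d1 ^+ 2 * p1 + x2 ^+ 2 * d2 ^+ 2 * p2 + x3 ^+ 2 * d3 ^+ 2 * p3.

Definition xv := vec3 x1 x2 x3.
Definition dv := vec3 d1 d2 d3.

Definition Nmx : 'M[rat]_(3, 7) :=
  \matrix_(i < 3, j < 7)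
    nth 0 [:: 1; dv i; xv i; xv i * dv i; xv i ^+ 2; dv i ^+ 2;
              xv i ^+ 2 * dv i ^+ 2] j.
Definition N1mx : 'M[rat]_(3, 2) := \matrix_(i < 3, j < 2) nth 0 [:: 1; dv i] j.
Definition N2mx : 'M[rat]_(3, 2) := \matrix_(i < 3, j < 2) nth 0 [:: 1; xv i] j.
End Polys.

(* Main.v *)
Require Import Defs.
From HB Require Import structures.
From mathcomp Require Import all_boot all_order all_algebra.
From mathcomp Require Import ring lra zify.
Import Order.TTheory GRing.Theory Num.Theory.
Local Open Scope ring_scope.

Lemma det_colsub0 (A : 'M[rat]_(3,7)) (g : 'I_3 -> 'I_7) :
  (\rank A <= 2)%N -> \det (colsub g A) = 0.
Proof.
move=> hr; apply/eqP; apply: contraTT hr => hd; rewrite -ltnNge.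
have hu : colsub g A \in unitmx by rewrite unitmxE unitfE.
have : (\rank (colsub g A) <= \rank A)%N.
  have -> : colsub g A = A *m colsub g 1%:M by rewrite mulmx_colsub mulmx1.
  exact: mxrankM_maxl.
by rewrite mxrank_unit.
Qed.

Definition sel (a b c : 'I_7) (i : 'I_3) : 'I_7 :=
  match val i with 0%N => a | 1%N => b | _ => c end.

Lemma vdm_d (x1 x2 x3 d1 d2 d3 : rat) : (\rank (Nmx x1 x2 x3 d1 d2 d3) <= 2)%N ->
  (d2 - d1) * (d3 - d1) * (d3 - d2) = 0.
Proof.
move=> /(fun h => det_colsub0 _ (sel 0 1 (@Ordinal 7 5 isT)) h).
rewrite (expand_det_row _ 0) !big_ord_recl !big_ord0 /cofactor.
rewrite !(expand_det_row _ 0) !big_ord_recl !big_ord0 /cofactor !det_mx11 !mxE /=.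
rewrite /sel /= /xv /dv /vec3 /=.
rewrite /bump /= => h; rewrite -[RHS]h; ring.
Qed.

Lemma lin_dx (x1 x2 x3 d1 d2 d3 : rat) : (\rank (Nmx x1 x2 x3 d1 d2 d3) <= 2)%N ->
  d2*x3 - d3*x2 - d1*x3 + d3*x1 + d1*x2 - d2*x1 = 0.
Proof.
move=> /(fun h => det_colsub0 _ (sel 0 1 (@Ordinal 7 2 isT)) h).
rewrite (expand_det_row _ 0) !big_ord_recl !big_ord0 /cofactor.
rewrite !(expand_det_row _ 0) !big_ord_recl !big_ord0 /cofactor !det_mx11 !mxE /=.
rewrite /sel /= /xv /dv /vec3 /=.
rewrite /bump /= => h; rewrite -[RHS]h; ring.
Qed.

Lemma N1_const (d : rat) : (\rank (N1mx d d d) <= 1)%N.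
Proof.
have -> : N1mx d d d = (const_mx 1 : 'M[rat]_(3,1)) *m (\row_(j < 2) nth 0 [:: 1; d] j).
  apply/matrixP => i j; rewrite !mxE big_ord1 !mxE mul1r.
  by rewrite /dv /vec3; case: (val i) => [|[|]].
exact: leq_trans (mxrankM_maxl _ _) (rank_leq_col _).
Qed.

Lemma sqrt2_nat (m : nat) : forall n : nat, (0 < m)%N -> (n ^ 2 = 2 * m ^ 2)%N -> False.
Proof.
elim: m {-2}m (leqnn m) => [|M IH] m hm n hm0 h.
  by move: hm hm0; rewrite leqn0 => /eqP ->.
have ev : ~~ odd n.
  by apply/negP => hn; move: (congr1 odd h); rewrite oddX oddM /= hn.
move: h; rewrite -(odd_double_half n) (negbTE ev) add0n -muln2 => h.
have h2 : (m ^ 2 = 2 * (n./2) ^ 2)%N.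
  apply/eqP; rewrite -(eqn_pmul2l (isT : (0 < 2)%N)) -h; apply/eqP; ring.
have evm : ~~ odd m.
  by apply/negP => hn; move: (congr1 odd h2); rewrite oddX oddM /= hn.
move: h2; rewrite -(odd_double_half m) (negbTE evm) add0n -muln2 => h2.
have h3 : ((n./2) ^ 2 = 2 * (m./2) ^ 2)%N.
  apply/eqP; rewrite -(eqn_pmul2l (isT : (0 < 2)%N)) -h2; apply/eqP; ring.
apply: (IH (m./2) _ n./2 _ h3).
  move: hm hm0; rewrite -[in X in X -> _](odd_double_half m) (negbTE evm) add0n -muln2; lia.
move: hm0; rewrite -[in X in X -> _](odd_double_half m) (negbTE evm) add0n -muln2; lia.
Qed.

Lemma sqrt2_rat (a b : rat) : 0 < a -> 2 * a ^+ 2 = b ^+ 2 -> False.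
Proof.
move=> ha h.
set r := b / a.
have hr : r ^+ 2 = 2.
  rewrite /r expr_div_n -h mulfK // expf_neq0 // gt_eqF //.
have hd : (denq r)%:Q != 0 by rewrite intr_eq0 denq_neq0.
have hq : ((numq r ^+ 2 : int)%:~R : rat) = ((2 * denq r ^+ 2 : int)%:~R).
  move: hr; rewrite -{1}(divq_num_den r) expr_div_n => hr.
  rewrite !rmorphXn rmorphM /= (_ : (2:int)%:~R = 2 :> rat) // -hr.
  by rewrite rmorphXn mulfVK // expf_neq0.
move/intr_inj: hq => hq.
have := congr1 absz hq; rewrite abszM !abszX /= => hn.
apply: (sqrt2_nat `|denq r| `|numq r|) => //.
by rewrite absz_gt0 denq_neq0.
Qed.

Lemma cases3 (x1 x2 x3 d1 d2 d3 : rat) : (\rank (Nmx x1 x2 x3 d1 d2 d3) <= 2)%N ->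
  \rank (N1mx d1 d2 d3) = 2%N ->
  [\/ [/\ d1 = d2, x1 = x2 & d3 != d1], [/\ d2 = d3, x2 = x3 & d1 != d2]
    | [/\ d1 = d3, x1 = x3 & d2 != d1]].
Proof.
move=> hN h1; have V := @vdm_d _ _ _ _ _ _ hN; have L := @lin_dx _ _ _ _ _ _ hN.
have nall : ~ (d1 = d2 /\ d2 = d3).
  by case=> e1 e2; move: h1; rewrite -e2 -e1 => h; move: (N1_const d1); rewrite h.
move/eqP: V; rewrite !mulf_eq0 !subr_eq0 => /orP[/orP[/eqP e|/eqP e]|/eqP e].
- have n31 : d3 != d1 by apply/eqP => e'; apply: nall; split; congruence.
  constructor 1; split => //.
  have : (d3 - d1) * (x1 - x2) = 0.
    by rewrite -L e; ring.
  by move/eqP; rewrite mulf_eq0 !subr_eq0 (negbTE n31) /= => /eqP.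
- have n21 : d2 != d1 by apply/eqP => e'; apply: nall; split; congruence.
  constructor 3; split => //.
  have : (d2 - d1) * (x3 - x1) = 0 by rewrite -L e; ring.
  by move/eqP; rewrite mulf_eq0 !subr_eq0 (negbTE n21) /= => /eqP.
- have n12 : d1 != d2 by apply/eqP => e'; apply: nall; split; congruence.
  constructor 2; split => //.
  have : (d2 - d1) * (x3 - x2) = 0 by rewrite -L e; ring.
  by move/eqP; rewrite mulf_eq0 !subr_eq0 eq_sym (negbTE n12) /= => /eqP.
Qed.

Theorem theorem6p1 :
  (~ exists x1 x2 x3 d1 d2 d3 L : rat,
      [/\ 0 < x1, 0 < x2 & 0 < x3] /\ [/\ 0 < d1, 0 < d2 & 0 < d3] /\
      [/\ (\rank (Nmx x1 x2 x3 d1 d2 d3) <= 2)%N,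
          \rank (N1mx d1 d2 d3) = 2%N & \rank (N2mx x1 x2 x3) = 2%N] /\
      [/\ pt2 x1 x2 x3 d1 d2 d3 = 0, pt3 x1 x2 x3 d1 d2 d3 = 0,
          pt4 x1 x2 x3 d1 d2 d3 = 0 & pt5 x1 x2 x3 d1 d2 d3 = 0] /\
      [/\ pt6 x1 x2 x3 d1 d2 d3 = 0, pt7 x1 x2 x3 d1 d2 d3 = 0 &
          pt8 x1 x2 x3 d1 d2 d3 = 0])
  /\
  (~ exists x1 x2 x3 d1 d2 d3 L : rat,
      [/\ 0 < x1, 0 < x2 & 0 < x3] /\ [/\ 0 < d1, 0 < d2 & 0 < d3] /\
      [/\ (\rank (Nmx x1 x2 x3 d1 d2 d3) <= 2)%N,
          \rank (N1mx d1 d2 d3) = 2%N & \rank (N2mx x1 x2 x3) = 2%N] /\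
      [/\ p1 x2 x3 d1 = 0, p2 x1 x3 d2 = 0 & p3 x1 x2 d3 = 0]).
Proof.
split.
- case=> x1 [x2 [x3 [d1 [d2 [d3 [_ [[hx1 hx2 hx3] [_ [[hN h1 _] [[e2 e3 _ _] _]]]]]]]]]].
  case: (@cases3 _ _ _ _ _ _ hN h1) => [[ed ex nd]|[ed ex nd]|[ed ex nd]].
  + have E : (d3 - d1) * p3 x1 x2 d3 = pt3 x1 x2 x3 d1 d2 d3 - d1 * pt2 x1 x2 x3 d1 d2 d3.
      by rewrite /pt3 /pt2 -ed; ring.
    have : (d3 - d1) * p3 x1 x2 d3 = 0 by rewrite E e2 e3 mulr0 subr0.
    move/eqP; rewrite mulf_eq0 subr_eq0 (negbTE nd) /= /p3 -ex subr_eq0 => /eqP h.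
    by apply: (@sqrt2_rat x1 d3 hx1); rewrite -h; ring.
  + have E : (d1 - d2) * p1 x2 x3 d1 = pt3 x1 x2 x3 d1 d2 d3 - d2 * pt2 x1 x2 x3 d1 d2 d3.
      by rewrite /pt3 /pt2 -ed; ring.
    have : (d1 - d2) * p1 x2 x3 d1 = 0 by rewrite E e2 e3 mulr0 subr0.
    move/eqP; rewrite mulf_eq0 subr_eq0 (negbTE nd) /= /p1 -ex subr_eq0 => /eqP h.
    by apply: (@sqrt2_rat x2 d1 hx2); rewrite -h; ring.
  + have E : (d2 - d1) * p2 x1 x3 d2 = pt3 x1 x2 x3 d1 d2 d3 - d1 * pt2 x1 x2 x3 d1 d2 d3.
      by rewrite /pt3 /pt2 -ed; ring.
    have : (d2 - d1) * p2 x1 x3 d2 = 0 by rewrite E e2 e3 mulr0 subr0.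
    move/eqP; rewrite mulf_eq0 subr_eq0 (negbTE nd) /= /p2 -ex subr_eq0 => /eqP h.
    by apply: (@sqrt2_rat x1 d2 hx1); rewrite -h; ring.
- case=> x1 [x2 [x3 [d1 [d2 [d3 [_ [[hx1 hx2 hx3] [_ [[hN h1 _] [e1 e2 e3]]]]]]]]]].
  case: (@cases3 _ _ _ _ _ _ hN h1) => [[ed ex nd]|[ed ex nd]|[ed ex nd]].
  + move/eqP: e3; rewrite /p3 -ex subr_eq0 => /eqP h.
    by apply: (@sqrt2_rat x1 d3 hx1); rewrite -h; ring.
  + move/eqP: e1; rewrite /p1 -ex subr_eq0 => /eqP h.
    by apply: (@sqrt2_rat x2 d1 hx2); rewrite -h; ring.
  + move/eqP: e2; rewrite /p2 -ex subr_eq0 => /eqP h.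
    by apply: (@sqrt2_rat x1 d2 hx1); rewrite -h; ring.
Qed.
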